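(* Let $q,r,\mu,\nu$ be positive integers. For all $z\in\mathbb{C}$, \[ \mathcal{M}(z)=(I_\mu\otimes U_q(z))\,\mathcal{A}\,(I_\nu\otimes W_r(z)), \] and $\mathcal{M}(z)$ and $\mathcal{A}$ have the same rank, equal to $\min\{\mu,r\}\cdot\min\{\nu,q\}$.
   Context: Matrix indices start at $0$. $u(z)=(1,z,\dots,z^{q-1})^\top$, $w(z)=(1,z,\dots,z^{r-1})$, $M(z)=u(z)w(z)\in\mathbb{C}^{q\times r}$, and $M^{(k)}$ denotes the $k$-th derivative in $z$. $\mathcal{M}(z)\in\mathbb{C}^{\mu q\times\nu r}$ is the block matrix with $(i,j)$ block $M^{(i+j)}(z)$, $i=0,\dots,\mu-1$, $j=0,\dots,\nu-1$. $U_q(z)=(u(z),u'(z),\dots,u^{(q-1)}(z))\in\mathbb{C}^{q\times q}$ and $W_r(z)\in\mathbb{C}^{r\times r}$ is the matrix whose $i$-th row is $w^{(i)}(z)$, $i=0,\dots,r-1$. $\mathcal{A}\in\mathbb{R}^{\mu q\times\nu r}$ is the block matrix with $(i,j)$ block $A^{i+j}$, where $A^k\in\mathbb{R}^{q\times r}$ has entries $A^k_{ab}=\binom{k}{a}$ if $a+b=k$ and $0$ otherwise. *)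

(* Defs.v *)
From HB Require Import structures.
From mathcomp Require Import all_boot all_order all_algebra.
From mathcomp Require Import reals.
From mathcomp.real_closed Require Import complex mxtens.
Set Implicit Arguments. Unset Strict Implicit. Unset Printing Implicit Defensive.
Import Order.TTheory GRing.Theory Num.Theory.
Local Open Scope ring_scope.

(* Block indexing: index i of 'I_(m*n) <-> pair (i %/ n, i %% n), block-row major,
   via mathcomp's mxtens_unindex (consistent with the Kronecker product tensmx). *)

(* k-th derivative (in z) of M(z) = u(z) w(z), i.e. of the matrix (z^(a+b))_{a<q,b<r}. *)
Definition Mder (C : fieldType) (q r k : nat) (z : C) : 'M[C]_(q, r) :=
  \matrix_(a < q, b < r) (('X^(a + b) : {poly C})^`(k)).[z].

Definition calM (C : fieldType) (mu nu q r : nat) (z : C) : 'M[C]_(mu * q, nu * r) :=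
  \matrix_(i, j) Mder q r ((mxtens_unindex i).1 + (mxtens_unindex j).1) z
                          (mxtens_unindex i).2 (mxtens_unindex j).2.

Definition Umx (C : fieldType) (q : nat) (z : C) : 'M[C]_q :=
  \matrix_(a < q, j < q) (('X^a : {poly C})^`(j)).[z].

Definition Wmx (C : fieldType) (r : nat) (z : C) : 'M[C]_r :=
  \matrix_(i < r, b < r) (('X^b : {poly C})^`(i)).[z].

Definition Ak (R : pzRingType) (q r k : nat) : 'M[R]_(q, r) :=
  \matrix_(a < q, b < r) (if (a + b == k)%N then ('C(k, a))%:R else 0).

Definition calA (R : pzRingType) (mu nu q r : nat) : 'M[R]_(mu * q, nu * r) :=
  \matrix_(i, j) Ak R q r ((mxtens_unindex i).1 + (mxtens_unindex j).1)
                          (mxtens_unindex i).2 (mxtens_unindex j).2.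

(* Main.v *)
From HB Require Import structures.
From mathcomp Require Import all_boot all_order all_algebra.
From mathcomp Require Import reals zify ring.
From mathcomp.real_closed Require Import complex mxtens.
Require Import Defs.
Set Implicit Arguments. Unset Strict Implicit. Unset Printing Implicit Defensive.
Import Order.TTheory GRing.Theory Num.Theory.
Local Open Scope ring_scope.

Lemma sum_pair (V : nmodType) m n (G : 'I_(m * n) -> V) :
  \sum_(k < m * n) G k = \sum_(i < m) \sum_(j < n) G (mxtens_index (i, j)).
Proof.
rewrite pair_big /= (reindex (@mxtens_index m n)) /=; last first.
  by exists (@mxtens_unindex m n) => x _; rewrite ?mxtens_indexK ?mxtens_unindexK.
by apply: eq_bigr => -[i j] _.
Qed.

Lemma sum_delta (E g : nat) (x : nat -> nat) :
  (\sum_(e < E) (if (e : nat) == g then x e else 0) = if g < E then x g else 0)%N.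
Proof.
case: ltnP => h.
  rewrite (bigD1 (Ordinal h)) //= eqxx big1 ?addn0 // => e /eqP ne.
  rewrite ifN //; apply/eqP => eg; apply: ne; exact: val_inj.
rewrite big1 // => e _; rewrite ifN //; apply/eqP => eg.
by have := ltn_ord e; rewrite eg ltnNge h.
Qed.

Lemma XY_nat mu nu q r i j c d : (i < mu)%N -> (j < nu)%N -> (c < q)%N -> (d < r)%N ->
 (\sum_(f < minn mu r) \sum_(e < minn nu q)
   ((if c + f == i + e then 'C(i, f) else 0) * (if j + f == d + e then 'C(j, e) else 0))
  = if c + d == i + j then 'C(i + j, c) else 0)%N.
Proof.
move=> hi hj hc hd.
case: (eqVneq (c + d) (i + j)) => h; last first.
  rewrite big1 // => f _; rewrite big1 // => e _.
  case: eqP => h1; case: eqP => h2 //; rewrite ?muln0 //; lia.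
transitivity (\sum_(f < minn mu r)
   (if c + f - i < minn nu q then (if i <= c + f then 'C(i, f) * 'C(j, c + f - i) else 0) else 0))%N.
  apply: eq_bigr => f _.
  rewrite (eq_bigr (fun e : 'I_(minn nu q) => if (e : nat) == c + f - i then
     (if i <= c + f then 'C(i, f) * 'C(j, e) else 0) else 0)%N); first exact: (sum_delta (minn nu q) (c + f - i)
     (fun e => if i <= c + f then 'C(i, f) * 'C(j, e) else 0)%N).
  move=> e _.
  case: eqP => h1; case: eqP => h2; case: eqP => h3; case: (leqP i (c + f)) => h4 /=;
   rewrite ?muln0 ?mul0n //; lia.
have -> : 'C(i + j, c) = 'C(i + j, d).
  by rewrite -bin_sub; [congr 'C(_, _); lia | lia].
rewrite -binomial.Vandermonde.
rewrite (big_ord_widen (minn mu r + d.+1) (fun f => if c + f - i < minn nu q then (if i <= c + f then 'C(i, f) * 'C(j, c + f - i) else 0) else 0)%N); last lia.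
rewrite (big_ord_widen (minn mu r + d.+1) (fun f => 'C(i, f) * 'C(j, d - f))%N); last lia.
rewrite big_mkcond [RHS]big_mkcond /=; apply: eq_bigr => f _.
case: (leqP f i) => hfi; last first.
  rewrite bin_small // !mul0n; by do !case: ifP.
case: (leqP i (c + f)) => hicf; last first.
  have -> : ('C(j, d - f) = 0)%N by rewrite bin_small //; lia.
  by rewrite muln0; do !case: ifP.
case: (leqP (c + f - i) j) => hcj; last first.
  rewrite (bin_small hcj) muln0; do !case: ifP => //; lia.
have -> : (f < minn mu r)%N by lia.
have -> : (c + f - i < minn nu q)%N by lia.
have -> : (f < d.+1)%N by lia.
have -> : (d - f = j - (c + f - i))%N by lia.
by rewrite bin_sub.
Qed.

Lemma tri_kill (R : pzRingType) F E (v : 'I_F -> 'I_E -> R) :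
  (forall (f : 'I_F) (e : 'I_E), \sum_(f' < F) \sum_(e' < E)
      v f' e' * (if (e + f' == f + e')%N then 'C(f, f') else 0)%:R = 0) ->
  forall f e, v f e = 0.
Proof.
move=> H.
suff K : forall n (f : 'I_F) (e : 'I_E), (f < n)%N -> v f e = 0.
  by move=> f e; apply: (K f.+1).
elim=> [//|n IH] f e; rewrite ltnS leq_eqVlt => /orP[/eqP fn|]; last exact: IH.
have := H f e; rewrite (bigD1 f) //= (bigD1 e) //= (addnC e f) eqxx binn mulr1.
rewrite big1 ?addr0; last first.
  move=> e' ne; rewrite ifN ?mulr0 //; apply: contra ne => /eqP h.
  by apply/eqP/val_inj => /=; lia.
rewrite big1 ?addr0 //.
move=> f' nf; apply: big1 => e' _.
case: (ltngtP f' f) => h.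
- by rewrite IH ?mul0r //; rewrite -fn.
- by rewrite bin_small // if_same mulr0.
- by move: nf; rewrite (val_inj h) eqxx.
Qed.

Definition Xmx (R : pzRingType) mu q F E : 'M[R]_(mu * q, F * E) :=
  \matrix_(k, l) (if ((mxtens_unindex k).2 + (mxtens_unindex l).1
                    == (mxtens_unindex k).1 + (mxtens_unindex l).2)%N
                  then 'C((mxtens_unindex k).1, (mxtens_unindex l).1) else 0)%:R.

Definition Ymx (R : pzRingType) nu r F E : 'M[R]_(F * E, nu * r) :=
  \matrix_(l, k) (if ((mxtens_unindex k).1 + (mxtens_unindex l).1
                    == (mxtens_unindex k).2 + (mxtens_unindex l).2)%N
                  then 'C((mxtens_unindex k).1, (mxtens_unindex l).2) else 0)%:R.

Lemma calA_XY (R : pzRingType) mu nu q r :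
  calA R mu nu q r = Xmx R mu q (minn mu r) (minn nu q) *m Ymx R nu r (minn mu r) (minn nu q).
Proof.
apply/matrixP => k l; case: (mxtens_indexP k) => i c; case: (mxtens_indexP l) => j d.
rewrite !mxE !mxtens_indexK /= sum_pair.
transitivity ((\sum_(f < minn mu r) \sum_(e < minn nu q)
   ((if c + f == i + e then 'C(i, f) else 0) * (if j + f == d + e then 'C(j, e) else 0)))%N%:R : R).
  by rewrite XY_nat //; case: ifP.
rewrite natr_sum; apply: eq_bigr => f _; rewrite natr_sum; apply: eq_bigr => e _.
by rewrite natrM !mxE !mxtens_indexK.
Qed.

Lemma rowfree_of_inj (K : fieldType) m n (A : 'M[K]_(m, n)) :
  (forall v : 'rV_m, v *m A = 0 -> v = 0) -> row_free A.
Proof.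
move=> H; rewrite -kermx_eq0; apply/eqP/row_matrixP => k; rewrite row0; apply: H.
by rewrite -row_mul mulmx_ker row0.
Qed.

Lemma Xfree (K : fieldType) mu nu q r :
  row_free (Xmx K mu q (minn mu r) (minn nu q))^T.
Proof.
apply: rowfree_of_inj => v Hv; apply/rowP => l; case: (mxtens_indexP l) => f e.
rewrite mxE.
apply: (tri_kill (v := fun f e => v 0 (mxtens_index (f, e)))) => f0 e0.
have hf : (f0 < mu)%N by apply: leq_trans (ltn_ord f0) (geq_minl _ _).
have he : (e0 < q)%N by apply: leq_trans (ltn_ord e0) (geq_minr _ _).
move: (congr1 (fun M : 'rV_(mu * q) => M 0 (mxtens_index (Ordinal hf, Ordinal he))) Hv).
rewrite !mxE sum_pair => H; rewrite -[RHS]H; apply: eq_bigr => f' _; apply: eq_bigr => e' _.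
by rewrite !mxE !mxtens_indexK.
Qed.

Lemma Yfree (K : fieldType) mu nu q r :
  row_free (Ymx K nu r (minn mu r) (minn nu q)).
Proof.
apply: rowfree_of_inj => v Hv; apply/rowP => l; case: (mxtens_indexP l) => f e.
rewrite mxE.
apply: (tri_kill (v := fun e f => v 0 (mxtens_index (f, e)))) => e0 f0.
have he : (e0 < nu)%N by apply: leq_trans (ltn_ord e0) (geq_minl _ _).
have hf : (f0 < r)%N by apply: leq_trans (ltn_ord f0) (geq_minr _ _).
move: (congr1 (fun M : 'rV_(nu * r) => M 0 (mxtens_index (Ordinal he, Ordinal hf))) Hv).
rewrite !mxE sum_pair exchange_big => H; rewrite -[RHS]H; apply: eq_bigr => e' _; apply: eq_bigr => f' _.
by rewrite !mxE !mxtens_indexK /= eq_sym.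
Qed.

Lemma rank_calA (K : fieldType) mu nu q r :
  \rank (calA K mu nu q r) = (minn mu r * minn nu q)%N.
Proof.
rewrite calA_XY mxrankMfree ?Yfree // -mxrank_tr; apply/eqP; exact: Xfree.
Qed.



Lemma ffact_vdm k a b :
  (\sum_(c < k.+1) 'C(k, c) * a ^_ c * b ^_ (k - c) = (a + b) ^_ k)%N.
Proof.
rewrite -bin_ffact -binomial.Vandermonde big_distrl /=; apply: eq_bigr => c _.
have hc : (c <= k)%N by rewrite -ltnS.
rewrite -!bin_ffact -(bin_fact hc).
ring.
Qed.

Lemma FV2 q r a b k : (a < q)%N -> (b < r)%N ->
  (\sum_(c < q) \sum_(d < r) (if c + d == k then 'C(k, c) * a ^_ c * b ^_ d else 0)
   = (a + b) ^_ k)%N.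
Proof.
move=> ha hb.
transitivity (\sum_(c < q)
   (if k - c < r then (if c <= k then 'C(k, c) * a ^_ c * b ^_ (k - c) else 0) else 0))%N.
  apply: eq_bigr => c _.
  rewrite (eq_bigr (fun d : 'I_r => if (d : nat) == k - c then
     (if c <= k then 'C(k, c) * a ^_ c * b ^_ d else 0) else 0)%N); first exact: (sum_delta r (k - c)
     (fun d => if c <= k then 'C(k, c) * a ^_ c * b ^_ d else 0)%N).
  move=> d _.
  case: eqP => h1; case: eqP => h2; case: (leqP c k) => h4 /=; try lia.
rewrite -ffact_vdm.
rewrite (big_ord_widen (q + k.+1) (fun c => if k - c < r then (if c <= k then 'C(k, c) * a ^_ c * b ^_ (k - c) else 0) else 0)%N); last lia.
rewrite (big_ord_widen (q + k.+1) (fun c => 'C(k, c) * a ^_ c * b ^_ (k - c))%N); last lia.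
rewrite big_mkcond [RHS]big_mkcond /=; apply: eq_bigr => c _.
case: (leqP c a) => hca; last first.
  rewrite (ffact_small hca) muln0 mul0n; by do !case: ifP.
case: (leqP c k) => hck; last first.
  rewrite bin_small // !mul0n; by do !case: ifP.
case: (leqP (k - c) b) => hkb; last first.
  rewrite (ffact_small hkb) muln0; by do !case: ifP.
have -> : (c < q)%N by lia.
have -> : (k - c < r)%N by lia.
by have -> : (c < k.+1)%N by lia.
Qed.



Lemma mul_tens1_l (C : comNzRingType) mu q n (U : 'M[C]_q) (B : 'M[C]_(mu * q, n))
   (i : 'I_mu) (a : 'I_q) l :
  (((1%:M : 'M[C]_mu) *t U) *m B) (mxtens_index (i, a)) l
   = \sum_(c < q) U a c * B (mxtens_index (i, c)) l.
Proof.
rewrite mxE sum_pair (bigD1 i) //= [X in _ + X]big1 ?addr0.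
  by apply: eq_bigr => c _; rewrite !mxE !mxtens_indexK /= eqxx mulr1n mul1r.
move=> k nk; apply: big1 => c _.
by rewrite !mxE !mxtens_indexK /= eq_sym (negbTE nk) mulr0n !mul0r.
Qed.

Lemma mul_tens1_r (C : comNzRingType) nu r m (W : 'M[C]_r) (B : 'M[C]_(m, nu * r))
   (j : 'I_nu) (b : 'I_r) k :
  (B *m ((1%:M : 'M[C]_nu) *t W)) k (mxtens_index (j, b))
   = \sum_(d < r) B k (mxtens_index (j, d)) * W d b.
Proof.
rewrite mxE sum_pair (bigD1 j) //= [X in _ + X]big1 ?addr0.
  by apply: eq_bigr => d _; rewrite !mxE !mxtens_indexK /= eqxx mulr1n mul1r.
move=> k' nk; apply: big1 => d _.
by rewrite !mxE !mxtens_indexK /= (negbTE nk) mulr0n mul0r mulr0.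
Qed.

Lemma derX_eval (C : comNzRingType) n m (z : C) :
  (('X^n : {poly C})^`(m)).[z] = z ^+ (n - m) *+ n ^_ m.
Proof. by rewrite derivnXn hornerMn hornerXn. Qed.

Lemma factor (C : fieldType) mu nu q r (z : C) :
  calM mu nu q r z = ((1%:M : 'M[C]_mu) *t Umx q z) *m calA C mu nu q r
                      *m ((1%:M : 'M[C]_nu) *t Wmx r z).
Proof.
apply/matrixP => k l; case: (mxtens_indexP k) => i a; case: (mxtens_indexP l) => j b.
rewrite mul_tens1_r.
under eq_bigr do rewrite mul_tens1_l.
rewrite !mxE !mxtens_indexK /= derX_eval.
rewrite -(FV2 (i + j)%N (ltn_ord a) (ltn_ord b)) -mulr_natr natr_sum mulr_sumr.
under eq_bigr do rewrite mulr_suml.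
rewrite exchange_big /=; apply: eq_bigr => c _; rewrite natr_sum mulr_sumr.
apply: eq_bigr => d _.
rewrite !mxE !mxtens_indexK /= !derX_eval.
case: eqP => h /=; last by rewrite ?(mulr0, mul0r).
case: (leqP c a) => hca; last by rewrite (ffact_small hca) muln0 mul0n !mulr0n mulr0 !mul0r.
case: (leqP d b) => hdb; last by rewrite (ffact_small hdb) muln0 !mulr0n !mulr0.
have -> : (a + b - (i + j) = (a - c) + (b - d))%N by clear -h hca hdb; lia.
rewrite exprD !natrM -(mulr_natr (z ^+ (a - c))) -(mulr_natr (z ^+ (b - d))).
move: (z ^+ (a - c)) (z ^+ (b - d)) ('C(i + j, c))%:R (a ^_ c)%:R (b ^_ d)%:R.
move=> u v x y w; ring.

Qed.


Lemma map_calA (R1 R2 : fieldType) (f : {rmorphism R1 -> R2}) mu nu q r :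
  map_mx f (calA R1 mu nu q r) = calA R2 mu nu q r.
Proof. by apply/matrixP => k l; rewrite !mxE; case: ifP; rewrite ?rmorph_nat ?rmorph0. Qed.

Lemma Umx_unit (C : numFieldType) q (z : C) : Umx q z \in unitmx.
Proof.
rewrite unitmxE det_trig; last first.
  by apply/is_trig_mxP => a j hlt; rewrite mxE derX_eval ffact_small // mulr0n.
rewrite unitfE; apply/prodf_neq0 => i _.
by rewrite mxE derX_eval subnn expr0 ffactnn pnatr_eq0 -lt0n fact_gt0.
Qed.

Lemma Wmx_unit (C : numFieldType) r (z : C) : Wmx r z \in unitmx.
Proof.
rewrite -unitmx_tr unitmxE det_trig; last first.
  by apply/is_trig_mxP => a j hlt; rewrite !mxE derX_eval ffact_small // mulr0n.
rewrite unitfE; apply/prodf_neq0 => i _.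
by rewrite !mxE derX_eval subnn expr0 ffactnn pnatr_eq0 -lt0n fact_gt0.
Qed.

Theorem proposition3p1 (R : realType) (q r mu nu : nat) :
  (0 < q)%N -> (0 < r)%N -> (0 < mu)%N -> (0 < nu)%N ->
  (forall z : R[i],
     calM mu nu q r z =
       ((1%:M : 'M[R[i]]_mu) *t Umx q z) *m map_mx (real_complex R) (calA R mu nu q r)
         *m ((1%:M : 'M[R[i]]_nu) *t Wmx r z))
  /\ (forall z : R[i], \rank (calM mu nu q r z) = \rank (calA R mu nu q r))
  /\ \rank (calA R mu nu q r) = (minn mu r * minn nu q)%N.
Proof.
move=> hq hr hmu hnu.
have hA : \rank (calA R mu nu q r) = (minn mu r * minn nu q)%N by apply: rank_calA.
split; first by move=> z; rewrite map_calA factor.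
split=> // z.
rewrite hA factor mxrankMfree; last first.
  by rewrite row_free_unit tensmx_unit ?unitmx1 ?Wmx_unit // -lt0n.
rewrite -mxrank_tr trmx_mul mxrankMfree; last first.
  by rewrite row_free_unit unitmx_tr tensmx_unit ?unitmx1 ?Umx_unit // -lt0n.
by rewrite mxrank_tr rank_calA.
Qed.
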